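(* Let $A$ be a self-adjoint operator on a separable Hilbert space $\mathfrak H$ with dense domain $D(A)$. Let $K\ge1$ and for each $n$ let $(x_n^1,\dots,x_n^K)$ be an orthonormal system of vectors in $D(A)$ such that $x_n^j\rightharpoonup0$ weakly as $n\to\infty$ for every $j=1,\dots,K$. Let $W_n=\mathrm{span}(x_n^1,\dots,x_n^K)$. If $\lambda\in\mathbb R$ satisfies $\lim_{n\to\infty}\mathrm{dist}(\lambda,\sigma(A_{|W_n}))=0$, then $\lambda\in\mathrm{Spu}(A)\cup\sigma(A)$.
   Context: $D(A)$ carries the graph norm $\|x\|_{D(A)}^2=\|x\|^2+\|Ax\|^2$. For a finite-dimensional subspace $V\subset D(A)$, $P_V$ denotes the orthogonal projector onto $V$ and $A_{|V}$ the self-adjoint operator on $V$ given by the restriction of $P_VAP_V$ to $V$. A real number $\lambda$ is a spurious eigenvalue of $A$ (written $\lambda\in\mathrm{Spu}(A)$) if there is a sequence of finite-dimensional subspaces $V_n\subset D(A)$ with $V_n\subset V_{n+1}$ such that (i) $\bigcup_n V_n$ is dense in $D(A)$ for the graph norm; (ii) $\lim_{n\to\infty}\mathrm{dist}(\lambda,\sigma(A_{|V_n}))=0$; (iii) $\lambda\notin\sigma(A)$. *)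

(* Defs.v *)
From Stdlib Require Import Reals Lra List Arith.
Open Scope R_scope.

Record Cplx := mkC { Cre : R; Cim : R }.
Definition Czero : Cplx := mkC 0 0.
Definition Cone : Cplx := mkC 1 0.
Definition RtoC (r : R) : Cplx := mkC r 0.
Definition Cadd (a b : Cplx) : Cplx := mkC (Cre a + Cre b) (Cim a + Cim b).
Definition Copp (a : Cplx) : Cplx := mkC (- Cre a) (- Cim a).
Definition Cmul (a b : Cplx) : Cplx :=
  mkC (Cre a * Cre b - Cim a * Cim b) (Cre a * Cim b + Cim a * Cre b).
Definition Cconj (a : Cplx) : Cplx := mkC (Cre a) (- Cim a).
Definition Cmod (a : Cplx) : R := sqrt (Cre a * Cre a + Cim a * Cim a).

Record HilbertSpace := {
  hT :> Type;
  hzero : hT;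
  hadd : hT -> hT -> hT;
  hopp : hT -> hT;
  hscal : Cplx -> hT -> hT;
  hinner : hT -> hT -> Cplx;  (* linear in the first, conjugate-linear in the second argument *)
  hadd_assoc : forall x y z, hadd x (hadd y z) = hadd (hadd x y) z;
  hadd_comm : forall x y, hadd x y = hadd y x;
  hadd_zero : forall x, hadd x hzero = x;
  hadd_opp : forall x, hadd x (hopp x) = hzero;
  hscal_one : forall x, hscal Cone x = x;
  hscal_assoc : forall a b x, hscal a (hscal b x) = hscal (Cmul a b) x;
  hscal_addv : forall a x y, hscal a (hadd x y) = hadd (hscal a x) (hscal a y);
  hscal_adds : forall a b x, hscal (Cadd a b) x = hadd (hscal a x) (hscal b x);
  hinner_conj : forall x y, hinner y x = Cconj (hinner x y);
  hinner_add : forall x y z, hinner (hadd x y) z = Cadd (hinner x z) (hinner y z);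
  hinner_scal : forall a x y, hinner (hscal a x) y = Cmul a (hinner x y);
  hinner_pos : forall x, 0 <= Cre (hinner x x);
  hinner_def : forall x, Cre (hinner x x) = 0 -> x = hzero;
  hcomplete : forall u : nat -> hT,
    (forall eps, eps > 0 -> exists N, forall m n, (m >= N)%nat -> (n >= N)%nat ->
        sqrt (Cre (hinner (hadd (u m) (hopp (u n))) (hadd (u m) (hopp (u n))))) < eps) ->
    exists l, forall eps, eps > 0 -> exists N, forall n, (n >= N)%nat ->
        sqrt (Cre (hinner (hadd (u n) (hopp l)) (hadd (u n) (hopp l)))) < eps;
  hseparable : exists e : nat -> hT, forall x eps, eps > 0 -> exists k,
        sqrt (Cre (hinner (hadd x (hopp (e k))) (hadd x (hopp (e k))))) < eps
}.

Section HilbertDefs.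
Variable E : HilbertSpace.

Definition hsub (x y : E) : E := hadd E x (hopp E y).
Definition hnorm (x : E) : R := sqrt (Cre (hinner E x x)).

(* ---------- unbounded operators: a domain D and a map A (values off D irrelevant) ---------- *)
Definition is_subspace (D : E -> Prop) : Prop :=
  D (hzero E) /\ (forall x y, D x -> D y -> D (hadd E x y)) /\
  (forall a x, D x -> D (hscal E a x)).

Definition is_dense (D : E -> Prop) : Prop :=
  forall x eps, eps > 0 -> exists y, D y /\ hnorm (hsub x y) < eps.

(* A self-adjoint operator with dense domain D: linear, symmetric, and D(A^* ) ⊆ D(A),
   i.e. A = A^*. *)
Definition is_self_adjoint (D : E -> Prop) (A : E -> E) : Prop :=
  is_subspace D /\ is_dense D /\
  (forall x y, D x -> D y -> A (hadd E x y) = hadd E (A x) (A y)) /\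
  (forall a x, D x -> A (hscal E a x) = hscal E a (A x)) /\
  (forall x y, D x -> D y -> hinner E (A x) y = hinner E x (A y)) /\
  (forall y z, (forall x, D x -> hinner E (A x) y = hinner E x z) -> D y /\ A y = z).

(* resolvent set (real points): A - λ : D(A) -> H is bijective with bounded inverse *)
Definition in_resolvent (D : E -> Prop) (A : E -> E) (lam : R) : Prop :=
  exists B : E -> E,
    (forall y, D (B y) /\ hsub (A (B y)) (hscal E (RtoC lam) (B y)) = y) /\
    (forall x, D x -> B (hsub (A x) (hscal E (RtoC lam) x)) = x) /\
    (exists c, forall y, hnorm (B y) <= c * hnorm y).

Definition in_spectrum (D : E -> Prop) (A : E -> E) (lam : R) : Prop :=
  ~ in_resolvent D A lam.

Fixpoint lincomb (cs : list Cplx) (vs : list E) : E :=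
  match cs, vs with
  | c :: cs', v :: vs' => hadd E (hscal E c v) (lincomb cs' vs')
  | _, _ => hzero E
  end.

Definition span (vs : list E) (x : E) : Prop :=
  exists cs : list Cplx, length cs = length vs /\ x = lincomb cs vs.

(* spectrum of A_{|V} = restriction of P_V A P_V to V (V = span vs ⊆ D(A)):
   μ is an eigenvalue iff some nonzero v ∈ V has P_V(A v) = μ v, i.e.
   <A v - μ v, w> = 0 for all w ∈ V.  A_{|V} is self-adjoint on a finite-dim.
   space, so its spectrum is a finite subset of R. *)
Definition in_spectrum_compression (A : E -> E) (vs : list E) (mu : R) : Prop :=
  exists v, span vs v /\ v <> hzero E /\
    forall w, span vs w -> hinner E (hsub (A v) (hscal E (RtoC mu) v)) w = Czero.

(* lim_n dist(λ, S_n) = 0, with dist(λ,S) = inf_{μ∈S} |λ-μ| (inf ∅ = +∞):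
   dist(λ,S) < ε  iff  ∃ μ ∈ S, |λ-μ| < ε. *)
Definition dist_tends_to_zero (lam : R) (S : nat -> R -> Prop) : Prop :=
  forall eps, eps > 0 -> exists N, forall n, (n >= N)%nat ->
    exists mu, S n mu /\ Rabs (lam - mu) < eps.

Definition spurious (D : E -> Prop) (A : E -> E) (lam : R) : Prop :=
  exists V : nat -> list E,
    (forall n v, In v (V n) -> D v) /\
    (forall n x, span (V n) x -> span (V (S n)) x) /\
    (forall x eps, D x -> eps > 0 -> exists n y, span (V n) y /\
        hnorm (hsub x y) ^ 2 + hnorm (hsub (A x) (A y)) ^ 2 < eps ^ 2) /\
    dist_tends_to_zero lam (fun n => in_spectrum_compression A (V n)) /\
    ~ in_spectrum D A lam.

Definition weakly_to_zero (u : nat -> E) : Prop :=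
  forall y eps, eps > 0 -> exists N, forall n, (n >= N)%nat ->
    Cmod (hinner E (u n) y) < eps.

End HilbertDefs.

(* Main.v *)
Require Import Defs.
From Stdlib Require Import Reals Lra List Arith Lia Classical ClassicalEpsilon ZArith.
Open Scope R_scope.

Lemma Ceq (a b : Cplx) : Cre a = Cre b -> Cim a = Cim b -> a = b.
Proof. destruct a, b; simpl; intros; subst; reflexivity. Qed.

Ltac cring := apply Ceq; unfold Cadd, Cmul, Copp, Cconj, RtoC, Czero, Cone; simpl; ring.

Section Alg.
Variable E : HilbertSpace.
Notation "<< x , y >>" := (hinner E x y).
Notation "x +v y" := (hadd E x y) (at level 50, left associativity).
Notation "a *v x" := (hscal E a x) (at level 40).

Lemma inner_zero_l y : << hzero E, y >> = Czero.
Proof.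
  assert (H : << hzero E +v hzero E, y >> = << hzero E, y>>) by now rewrite hadd_zero.
  rewrite hinner_add in H. apply Ceq.
  - apply (f_equal Cre) in H. simpl in *. lra.
  - assert (H' : << hzero E +v hzero E, y >> = << hzero E, y>>) by now rewrite hadd_zero.
    rewrite hinner_add in H'. apply (f_equal Cim) in H'. simpl in *. lra.
Qed.

Lemma inner_opp_l x y : << hopp E x, y >> = Copp << x, y >>.
Proof.
  assert (H : << x +v hopp E x, y >> = Czero) by (rewrite hadd_opp; apply inner_zero_l).
  rewrite hinner_add in H. apply Ceq.
  - apply (f_equal Cre) in H. simpl in *. lra.
  - apply (f_equal Cim) in H. simpl in *. lra.
Qed.

Lemma inner_add_r x y z : << x, y +v z >> = Cadd << x, y >> << x, z >>.
Proof.
  rewrite hinner_conj, hinner_add, (hinner_conj E x y), (hinner_conj E x z).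
  rewrite (hinner_conj E y x), (hinner_conj E z x). cring.
Qed.

Lemma inner_scal_r a x y : << x, a *v y >> = Cmul (Cconj a) << x, y >>.
Proof.
  rewrite hinner_conj, hinner_scal, (hinner_conj E y x). cring.
Qed.

Lemma inner_opp_r x y : << x, hopp E y >> = Copp << x, y >>.
Proof. rewrite hinner_conj, inner_opp_l, (hinner_conj E y x). cring. Qed.

Lemma inner_zero_r x : << x, hzero E >> = Czero.
Proof. rewrite hinner_conj, inner_zero_l. cring. Qed.

Lemma inner_sub_l x y z : << hsub E x y, z >> = Cadd << x, z >> (Copp << y, z >>).
Proof. unfold hsub. now rewrite hinner_add, inner_opp_l. Qed.

Lemma inner_sub_r x y z : << x, hsub E y z >> = Cadd << x, y >> (Copp << x, z >>).
Proof. unfold hsub. now rewrite inner_add_r, inner_opp_r. Qed.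

Lemma vec_ext u v : (forall w, << u, w >> = << v, w >>) -> u = v.
Proof.
  intros H.
  assert (H0 : hsub E u v = hzero E).
  { apply hinner_def. rewrite inner_sub_l, H. simpl. lra. }
  unfold hsub in H0.
  rewrite <- (hadd_zero E u). rewrite <- (hadd_opp E v).
  rewrite (hadd_comm E v (hopp E v)), hadd_assoc, H0, hadd_comm, hadd_zero. reflexivity.
Qed.

Lemma inner_im_self x : Cim << x, x >> = 0.
Proof. pose proof (f_equal Cim (hinner_conj E x x)). simpl in H. lra. Qed.

Lemma inner_self_real x : << x, x >> = RtoC (Cre << x, x >>).
Proof. apply Ceq; simpl; [reflexivity| apply inner_im_self]. Qed.

End Alg.

Ltac inner_simpl :=
  repeat (rewrite ?hinner_add, ?hinner_scal, ?inner_opp_l, ?inner_zero_l, ?inner_sub_l,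
     ?inner_add_r, ?inner_scal_r, ?inner_opp_r, ?inner_zero_r, ?inner_sub_r).

Section Lists.
Variable E : HilbertSpace.
Notation "<< x , y >>" := (hinner E x y).
Notation "x +v y" := (hadd E x y) (at level 50, left associativity).
Notation "a *v x" := (hscal E a x) (at level 40).

Definition lsum (l : list E) : E := fold_right (hadd E) (hzero E) l.
Definition Csum (l : list Cplx) : Cplx := fold_right Cadd Czero l.

Lemma inner_lsum_l (f : E -> E) R h :
  << lsum (map f R), h >> = Csum (map (fun r => << f r, h >>) R).
Proof.
  induction R as [|r R IH]; simpl.
  - apply inner_zero_l.
  - rewrite hinner_add, IH. reflexivity.
Qed.

Lemma lsum_scal_zero (R : list E) : lsum (map (fun r => Czero *v r) R) = hzero E.
Proof.
  apply vec_ext; intro w. rewrite inner_lsum_l, inner_zero_l.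
  induction R; simpl; auto. rewrite IHR, hinner_scal. cring.
Qed.

Lemma scal_zero_v x : Czero *v x = hzero E.
Proof. apply vec_ext; intro w. inner_simpl. cring. Qed.

Lemma scal_v_zero a : a *v hzero E = hzero E.
Proof. apply vec_ext; intro w. inner_simpl. cring. Qed.

Lemma add_zero_l x : hzero E +v x = x.
Proof. rewrite hadd_comm. apply hadd_zero. Qed.

Lemma inner_lincomb_orth u cs vs :
  (forall v, In v vs -> << u, v >> = Czero) -> << u, lincomb E cs vs >> = Czero.
Proof.
  revert cs; induction vs as [|v vs IH]; intros cs H; destruct cs; simpl;
    try apply inner_zero_r.
  rewrite inner_add_r, inner_scal_r, H by (left; auto).
  rewrite IH by (intros; apply H; right; auto). cring.
Qed.

Lemma lincomb_zeros k vs : lincomb E (repeat Czero k) vs = hzero E.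
Proof.
  revert vs; induction k; intros vs; destruct vs; simpl; auto.
  rewrite IHk, scal_zero_v, hadd_zero. reflexivity.
Qed.

Lemma lincomb_app cs1 cs2 vs1 vs2 : length cs1 = length vs1 ->
  lincomb E (cs1 ++ cs2) (vs1 ++ vs2) = lincomb E cs1 vs1 +v lincomb E cs2 vs2.
Proof.
  revert vs1; induction cs1; intros vs1 Hl; destruct vs1; simpl in *; try lia.
  - rewrite add_zero_l. reflexivity.
  - rewrite IHcs1 by lia. apply hadd_assoc.
Qed.

Lemma span_app_l vs ws x : span E vs x -> span E (vs ++ ws) x.
Proof.
  intros [cs [Hl Hx]]. exists (cs ++ repeat Czero (length ws)). split.
  - rewrite !length_app, repeat_length. lia.
  - rewrite lincomb_app by auto. rewrite lincomb_zeros, hadd_zero. auto.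
Qed.

Lemma span_app_r vs ws x : span E ws x -> span E (vs ++ ws) x.
Proof.
  intros [cs [Hl Hx]]. exists (repeat Czero (length vs) ++ cs). split.
  - rewrite !length_app, repeat_length. lia.
  - rewrite lincomb_app by (rewrite repeat_length; auto).
    rewrite lincomb_zeros, add_zero_l. auto.
Qed.

Lemma span_single v : span E (v :: nil) v.
Proof. exists (Cone :: nil). split; auto. simpl. rewrite hadd_zero, hscal_one. auto. Qed.

Lemma span_head v vs : span E (v :: vs) v.
Proof. apply (span_app_l (v::nil) vs), span_single. Qed.

Lemma lincomb_scal a cs vs : lincomb E (map (Cmul a) cs) vs = a *v lincomb E cs vs.
Proof.
  revert vs; induction cs; intros vs; destruct vs; simpl;
    try (rewrite scal_v_zero; auto).
  rewrite IHcs. apply vec_ext; intro w. inner_simpl. cring.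
Qed.

Lemma span_scal vs a x : span E vs x -> span E vs (a *v x).
Proof.
  intros [cs [Hl Hx]]. exists (map (Cmul a) cs). split.
  - rewrite length_map; auto.
  - rewrite lincomb_scal, Hx. auto.
Qed.

Fixpoint ONL (vs : list E) : Prop :=
  match vs with
  | nil => True
  | v :: vs' => << v, v >> = Cone /\ (forall w, In w vs' -> << v, w >> = Czero) /\ ONL vs'
  end.

Definition sqsum (cs : list Cplx) : R :=
  fold_right (fun c acc => Cre c * Cre c + Cim c * Cim c + acc) 0 cs.

Lemma sqsum_nonneg cs : 0 <= sqsum cs.
Proof. induction cs; simpl; nra. Qed.

Lemma lincomb_norm cs vs : ONL vs -> length cs = length vs ->
  Cre << lincomb E cs vs, lincomb E cs vs >> = sqsum cs.
Proof.
  revert cs; induction vs as [|v vs IH]; intros cs Hon Hl; destruct cs; simpl in *; try lia.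
  - rewrite inner_zero_l. auto.
  - destruct Hon as [H1 [H2 H3]].
    assert (Ho : << v, lincomb E cs vs >> = Czero) by (apply inner_lincomb_orth; auto).
    assert (Ho' : << lincomb E cs vs, v >> = Czero) by (rewrite hinner_conj, Ho; cring).
    inner_simpl. rewrite H1, Ho, Ho'. simpl. rewrite <- (IH cs) by (auto; lia).
    ring.
Qed.

Lemma sqsum_bound cs c : In c cs -> Cre c * Cre c + Cim c * Cim c <= sqsum cs.
Proof.
  induction cs; simpl; intros H; [contradiction|].
  pose proof (sqsum_nonneg cs). destruct H; subst; [lra|].
  specialize (IHcs H). nra.
Qed.

Lemma weak_bound cs vs h d :
  (forall c, In c cs -> -1 <= Cre c <= 1 /\ -1 <= Cim c <= 1) ->
  (forall v, In v vs -> Rabs (Cre << v, h >>) <= d /\ Rabs (Cim << v, h >>) <= d) ->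
  Rabs (Cre << lincomb E cs vs, h >>) <= 2 * d * INR (length vs) /\
  Rabs (Cim << lincomb E cs vs, h >>) <= 2 * d * INR (length vs).
Proof.
  revert cs; induction vs as [|v vs IH]; intros cs Hc Hv.
  - destruct cs; simpl; rewrite inner_zero_l; simpl; rewrite Rabs_R0; split; lra.
  - assert (Hd : 0 <= d) by (destruct (Hv v (or_introl eq_refl)) as [Ha _];
                             pose proof (Rabs_pos (Cre << v, h >>)); lra).
    pose proof (pos_INR (length vs)).
    simpl length. rewrite S_INR.
    destruct cs as [|c cs].
    + simpl; rewrite inner_zero_l; simpl; rewrite Rabs_R0; split; nra.
    + destruct (IH cs) as [I1 I2]; [intros; apply Hc; right; auto| intros; apply Hv; right; auto|].
      destruct (Hc c (or_introl eq_refl)) as [C1 C2].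
      destruct (Hv v (or_introl eq_refl)) as [V1 V2].
      simpl lincomb. rewrite hinner_add, hinner_scal. simpl.
      revert I1 I2 V1 V2. generalize (Cre << v, h >>) (Cim << v, h >>)
        (Cre << lincomb E cs vs, h >>) (Cim << lincomb E cs vs, h >>).
      intros a b x y. unfold Rabs; repeat destruct Rcase_abs; intros; split; nra.
Qed.

End Lists.

Definition cz (a : nat -> Cplx) : Prop :=
  forall eps, eps > 0 -> exists N, forall m, (m >= N)%nat ->
    Rabs (Cre (a m)) < eps /\ Rabs (Cim (a m)) < eps.

Lemma cz_ext a b : (forall m, a m = b m) -> cz a -> cz b.
Proof. intros H Ha eps He. destruct (Ha eps He) as [N HN]. exists N. intros m Hm. rewrite <- H. auto. Qed.

Lemma cz_zero : cz (fun _ => Czero).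
Proof. intros eps He. exists 0%nat. intros. simpl. rewrite Rabs_R0. lra. Qed.

Lemma cz_add a b : cz a -> cz b -> cz (fun m => Cadd (a m) (b m)).
Proof.
  intros Ha Hb eps He. destruct (Ha (eps/2)) as [N1 H1]; [lra|].
  destruct (Hb (eps/2)) as [N2 H2]; [lra|]. exists (N1 + N2)%nat. intros m Hm.
  destruct (H1 m) as [A1 A2]; [lia|]. destruct (H2 m) as [B1 B2]; [lia|]. simpl.
  revert A1 A2 B1 B2. generalize (Cre (a m)) (Cim (a m)) (Cre (b m)) (Cim (b m)).
  intros. unfold Rabs in *; repeat destruct Rcase_abs; split; lra.
Qed.

Lemma cz_opp a : cz a -> cz (fun m => Copp (a m)).
Proof.
  intros Ha eps He. destruct (Ha eps He) as [N H]. exists N. intros m Hm. simpl.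
  rewrite !Rabs_Ropp. auto.
Qed.

Lemma cz_conj a : cz a -> cz (fun m => Cconj (a m)).
Proof.
  intros Ha eps He. destruct (Ha eps He) as [N H]. exists N. intros m Hm. simpl.
  rewrite !Rabs_Ropp. auto.
Qed.

Lemma cz_mul a b : cz a -> cz b -> cz (fun m => Cmul (a m) (b m)).
Proof.
  intros Ha Hb eps He. set (e := Rmin (1/2) (eps/2)).
  assert (He1 : 0 < e) by (unfold e; apply Rmin_glb_lt; lra).
  assert (He2 : e <= 1/2) by apply Rmin_l. assert (He3 : e <= eps/2) by apply Rmin_r.
  destruct (Ha e He1) as [N1 H1]. destruct (Hb e He1) as [N2 H2].
  exists (N1 + N2)%nat. intros m Hm.
  destruct (H1 m) as [A1 A2]; [lia|]. destruct (H2 m) as [B1 B2]; [lia|]. simpl.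
  revert A1 A2 B1 B2. generalize (Cre (a m)) (Cim (a m)) (Cre (b m)) (Cim (b m)).
  intros x y u v A1 A2 B1 B2.
  assert (Hxu : Rabs (x*u) <= e*e) by (rewrite Rabs_mult; apply Rmult_le_compat; [apply Rabs_pos|apply Rabs_pos|lra|lra]).
  assert (Hyv : Rabs (y*v) <= e*e) by (rewrite Rabs_mult; apply Rmult_le_compat; [apply Rabs_pos|apply Rabs_pos|lra|lra]).
  assert (Hxv : Rabs (x*v) <= e*e) by (rewrite Rabs_mult; apply Rmult_le_compat; [apply Rabs_pos|apply Rabs_pos|lra|lra]).
  assert (Hyu : Rabs (y*u) <= e*e) by (rewrite Rabs_mult; apply Rmult_le_compat; [apply Rabs_pos|apply Rabs_pos|lra|lra]).
  assert (e * e < e) by nra.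
  split.
  - unfold Rminus. eapply Rle_lt_trans; [apply Rabs_triang|]. rewrite Rabs_Ropp. lra.
  - eapply Rle_lt_trans; [apply Rabs_triang|]. lra.
Qed.

Lemma cz_const (c : Cplx) (a : nat -> Cplx) : cz a -> cz (fun m => Cmul c (a m)).
Proof.
  intros Ha eps He. set (k := Rabs (Cre c) + Rabs (Cim c) + 1).
  assert (Hk : 1 <= k) by (unfold k; pose proof (Rabs_pos (Cre c)); pose proof (Rabs_pos (Cim c)); lra).
  destruct (Ha (eps / k)) as [N H]. { apply Rdiv_lt_0_compat; lra. }
  exists N. intros m Hm. destruct (H m Hm) as [A1 A2]. simpl.
  assert (Hb : forall r x, Rabs r <= k -> Rabs x < eps / k -> Rabs (r * x) <= eps / k * Rabs r).
  { intros r x Hr Hx. rewrite Rabs_mult. rewrite Rmult_comm. apply Rmult_le_compat_r; [apply Rabs_pos| lra]. }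
  assert (R1 : Rabs (Cre c) <= k) by (unfold k; pose proof (Rabs_pos (Cim c)); lra).
  assert (R2 : Rabs (Cim c) <= k) by (unfold k; pose proof (Rabs_pos (Cre c)); lra).
  pose proof (Hb _ _ R1 A1). pose proof (Hb _ _ R1 A2). pose proof (Hb _ _ R2 A1). pose proof (Hb _ _ R2 A2).
  assert (Hs : eps / k * Rabs (Cre c) + eps / k * Rabs (Cim c) < eps).
  { assert (eps / k * k = eps) by (field; lra).
    assert (eps / k * (Rabs (Cre c) + Rabs (Cim c)) < eps / k * k).
    { apply Rmult_lt_compat_l. apply Rdiv_lt_0_compat; lra. unfold k. lra. }
    lra. }
  split.
  - unfold Rminus. eapply Rle_lt_trans; [apply Rabs_triang|]. rewrite Rabs_Ropp. lra.
  - eapply Rle_lt_trans; [apply Rabs_triang|]. lra.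
Qed.

Lemma cz_const_r (c : Cplx) (a : nat -> Cplx) : cz a -> cz (fun m => Cmul (a m) c).
Proof. intros H. apply (cz_ext (fun m => Cmul c (a m))). intros; cring. now apply cz_const. Qed.

Lemma cz_Csum {T : Type} (F : nat -> T -> Cplx) (l : list T) :
  (forall t, In t l -> cz (fun m => F m t)) -> cz (fun m => Csum (map (F m) l)).
Proof.
  induction l as [|t l IH]; intros H; simpl.
  - apply cz_zero.
  - apply (cz_add (fun m => F m t) (fun m => Csum (map (F m) l))).
    + apply H; left; auto.
    + apply IH. intros; apply H; right; auto.
Qed.

Section Op.
Variable E : HilbertSpace.
Notation "<< x , y >>" := (hinner E x y).
Notation "x +v y" := (hadd E x y) (at level 50, left associativity).
Notation "a *v x" := (hscal E a x) (at level 40).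
Variable D : E -> Prop.
Variable A : E -> E.
Variable lam : R.
Hypothesis hA : is_self_adjoint E D A.

Definition T (x : E) : E := hsub E (A x) (RtoC lam *v x).

Lemma opp_scal x : hopp E x = RtoC (-1) *v x.
Proof. apply vec_ext; intro w. inner_simpl. cring. Qed.

Lemma D_zero : D (hzero E).
Proof. destruct hA as [[H _] _]. auto. Qed.
Lemma D_add x y : D x -> D y -> D (x +v y).
Proof. destruct hA as [[_ [H _]] _]. auto. Qed.
Lemma D_scal a x : D x -> D (a *v x).
Proof. destruct hA as [[_ [_ H]] _]. auto. Qed.
Lemma D_sub x y : D x -> D y -> D (hsub E x y).
Proof. intros. unfold hsub. apply D_add; auto. rewrite opp_scal. apply D_scal; auto. Qed.
Lemma D_lsum (f : E -> E) R : (forall r, In r R -> D (f r)) -> D (lsum E (map f R)).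
Proof.
  induction R; simpl; intros H. apply D_zero. apply D_add; auto.
Qed.

Lemma A_add x y : D x -> D y -> A (x +v y) = A x +v A y.
Proof. destruct hA as [_ [_ [H _]]]. auto. Qed.
Lemma A_scal a x : D x -> A (a *v x) = a *v A x.
Proof. destruct hA as [_ [_ [_ [H _]]]]. auto. Qed.
Lemma A_sym x y : D x -> D y -> << A x, y >> = << x, A y >>.
Proof. destruct hA as [_ [_ [_ [_ [H _]]]]]. auto. Qed.
Lemma A_sub x y : D x -> D y -> A (hsub E x y) = hsub E (A x) (A y).
Proof.
  intros. unfold hsub. rewrite A_add; auto. rewrite !opp_scal, A_scal; auto.
  rewrite opp_scal; apply D_scal; auto.
Qed.

Lemma T_add x y : D x -> D y -> T (x +v y) = T x +v T y.
Proof. intros. unfold T. rewrite A_add; auto. apply vec_ext; intro w. inner_simpl. cring. Qed.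
Lemma T_scal a x : D x -> T (a *v x) = a *v T x.
Proof. intros. unfold T. rewrite A_scal; auto. apply vec_ext; intro w. inner_simpl. cring. Qed.
Lemma T_sub x y : D x -> D y -> T (hsub E x y) = hsub E (T x) (T y).
Proof. intros. unfold T. rewrite A_sub; auto. apply vec_ext; intro w. inner_simpl. cring. Qed.
Lemma T_sym x y : D x -> D y -> << T x, y >> = << x, T y >>.
Proof. intros. unfold T. inner_simpl. rewrite A_sym; auto. cring. Qed.
Lemma A_T x : A x = T x +v (RtoC lam *v x).
Proof. unfold T. apply vec_ext; intro w. inner_simpl. cring. Qed.

Variable B : E -> E.
Hypothesis HB1 : forall y, D (B y) /\ T (B y) = y.
Hypothesis HB2 : forall x, D x -> B (T x) = x.

Lemma DB y : D (B y). Proof. apply HB1. Qed.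
Lemma TB y : T (B y) = y. Proof. apply HB1. Qed.

Lemma B_add x y : B (x +v y) = B x +v B y.
Proof.
  rewrite <- (HB2 (B x +v B y)) by (apply D_add; apply DB).
  rewrite T_add by apply DB. rewrite !TB. reflexivity.
Qed.
Lemma B_scal a x : B (a *v x) = a *v B x.
Proof.
  rewrite <- (HB2 (a *v B x)) by (apply D_scal; apply DB).
  rewrite T_scal by apply DB. rewrite !TB. reflexivity.
Qed.
Lemma B_sub x y : B (hsub E x y) = hsub E (B x) (B y).
Proof.
  rewrite <- (HB2 (hsub E (B x) (B y))) by (apply D_sub; apply DB).
  rewrite T_sub by apply DB. rewrite !TB. reflexivity.
Qed.
Lemma B_zero : B (hzero E) = hzero E.
Proof.
  transitivity (B (Czero *v hzero E)). f_equal; symmetry; apply scal_zero_v.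
  rewrite B_scal; apply scal_zero_v.
Qed.
Lemma B_lsum (c : E -> Cplx) R :
  B (lsum E (map (fun r => c r *v r) R)) = lsum E (map (fun r => c r *v B r) R).
Proof.
  induction R; simpl. apply B_zero. rewrite B_add, B_scal, IHR. reflexivity.
Qed.
Lemma B_sym y u : << B y, u >> = << y, B u >>.
Proof.
  rewrite <- (TB u) at 1. rewrite <- T_sym by apply DB. rewrite TB. reflexivity.
Qed.

End Op.

Section GS.
Variable E : HilbertSpace.
Notation "<< x , y >>" := (hinner E x y).
Notation "x +v y" := (hadd E x y) (at level 50, left associativity).
Notation "a *v x" := (hscal E a x) (at level 40).
Variable D : E -> Prop.
Variable A : E -> E.
Variable lam : R.
Hypothesis hA : is_self_adjoint E D A.

Definition orth (a b : E) : Prop := << a, b >> = Czero.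
Definition pc (x s : E) : Cplx := Cmul << x, s >> (RtoC (/ Cre << s, s >>)).
Definition proj (R : list E) (x : E) : E := lsum E (map (fun s => pc x s *v s) R).

Lemma orth_sum (k : E -> Cplx) R s : In s R -> ForallOrdPairs orth R ->
  Csum (map (fun t => Cmul (k t) << t, s >>) R) = Cmul (k s) << s, s >>.
Proof.
  induction R as [|t R IH]; intros Hin Hf; [contradiction|].
  inversion Hf as [|a l Hfa Hfr]; subst. simpl.
  destruct (classic (In s R)) as [HR|HR].
  - rewrite IH; auto. rewrite Forall_forall in Hfa. rewrite (Hfa s HR). cring.
  - destruct Hin as [Hin|Hin]; [|contradiction]. subst t.
    assert (H0 : Csum (map (fun t => Cmul (k t) << t, s >>) R) = Czero).
    { clear IH HR Hfr Hf. induction R; simpl; auto.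
      inversion Hfa; subst. rewrite IHR by auto.
      rewrite hinner_conj. unfold orth in *. match goal with H : << s, a >> = Czero |- _ => rewrite H end. cring. }
    rewrite H0. cring.
Qed.

Lemma inner_proj_l R x r : In r R -> ForallOrdPairs orth R -> Cre << r, r >> > 0 ->
  << proj R x, r >> = << x, r >>.
Proof.
  intros Hin Hf Hp. unfold proj. rewrite inner_lsum_l.
  rewrite (map_ext _ (fun s => Cmul (pc x s) << s, r >>)) by (intros; apply hinner_scal).
  rewrite orth_sum; auto. unfold pc. rewrite (inner_self_real E r).
  apply Ceq; simpl; field; lra.
Qed.

Lemma proj_orth R x r : In r R -> ForallOrdPairs orth R -> Cre << r, r >> > 0 ->
  << hsub E x (proj R x), r >> = Czero.
Proof. intros. rewrite inner_sub_l, inner_proj_l; auto. cring. Qed.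

Lemma inner_lsum_orth y (c : E -> Cplx) R : (forall r, In r R -> << y, r >> = Czero) ->
  << y, lsum E (map (fun s => c s *v s) R) >> = Czero.
Proof.
  induction R; simpl; intros H. apply inner_zero_r.
  rewrite inner_add_r, inner_scal_r, H, IHR by auto. cring.
Qed.

Lemma GS (G : list E) : (forall g, In g G -> D g) -> exists R : list E,
  (forall r, In r R -> D r /\ Cre << r, r >> > 0) /\ ForallOrdPairs orth R /\
  (forall y, (forall r, In r R -> << y, r >> = Czero) -> forall g, In g G -> << y, g >> = Czero).
Proof.
  induction G as [|g G IH]; intros HD.
  - exists nil. split; [intros r []|split; [constructor|intros y _ g []]].
  - destruct IH as [R [H1 [H2 H3]]]; [intros; apply HD; right; auto|].
    set (r := hsub E g (proj R g)).
    assert (Hg : g = r +v proj R g).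
    { apply vec_ext; intro w. unfold r. inner_simpl. cring. }
    destruct (classic (r = hzero E)) as [Hr|Hr].
    + exists R. split; [auto|split; [auto|]]. intros y Hy g' [Hg'|Hg'].
      * subst g'. rewrite Hg, inner_add_r, Hr, inner_zero_r. unfold proj.
        rewrite inner_lsum_orth; auto. cring.
      * apply H3; auto.
    + exists (r :: R). split; [|split].
      * intros r' [<-|Hr']; [|apply H1; auto]. split.
        -- unfold r, proj. apply (D_sub E D A hA). apply HD; left; auto.
           apply (D_lsum E D A hA). intros. apply (D_scal E D A hA). apply H1; auto.
        -- pose proof (hinner_pos E r). destruct (Rle_lt_or_eq_dec _ _ H); auto.
           exfalso. apply Hr. apply hinner_def. auto.
      * constructor; auto. rewrite Forall_forall. intros s Hs. unfold orth, r.
        apply proj_orth; auto. apply H1; auto.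
      * intros y Hy g' [Hg'|Hg'].
        -- subst g'. rewrite Hg, inner_add_r, Hy by (left; auto). unfold proj.
           rewrite inner_lsum_orth by (intros; apply Hy; right; auto). cring.
        -- apply H3; auto. intros; apply Hy; right; auto.
Qed.

End GS.

Lemma Rabs_Cre_Cmod a : Rabs (Cre a) <= Cmod a.
Proof.
  unfold Cmod. rewrite <- sqrt_Rsqr_abs. apply sqrt_le_1_alt. unfold Rsqr. nra.
Qed.
Lemma Rabs_Cim_Cmod a : Rabs (Cim a) <= Cmod a.
Proof.
  unfold Cmod. rewrite <- sqrt_Rsqr_abs. apply sqrt_le_1_alt. unfold Rsqr. nra.
Qed.

Section W.
Variable E : HilbertSpace.
Notation "<< x , y >>" := (hinner E x y).
Notation "x +v y" := (hadd E x y) (at level 50, left associativity).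
Notation "a *v x" := (hscal E a x) (at level 40).
Variable K : nat.
Variable x : nat -> nat -> E.
Hypothesis hON : forall n i j, (i < K)%nat -> (j < K)%nat ->
           hinner E (x n i) (x n j) = if Nat.eq_dec i j then Cone else Czero.
Hypothesis hweak : forall j, (j < K)%nat -> weakly_to_zero E (fun n => x n j).

Definition W m := map (x m) (seq 0 K).

Lemma in_W m v : In v (W m) -> exists j, (j < K)%nat /\ v = x m j.
Proof. unfold W. rewrite in_map_iff. intros [j [<- Hj]]. rewrite in_seq in Hj. exists j. split; auto; lia. Qed.

Lemma ONL_seq m a k : (a + k <= K)%nat -> ONL E (map (x m) (seq a k)).
Proof.
  revert a; induction k; intros a Hk; simpl; auto. split; [|split].
  - rewrite hON by lia. destruct Nat.eq_dec; [auto|lia].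
  - intros w Hw. rewrite in_map_iff in Hw. destruct Hw as [j [<- Hj]]. rewrite in_seq in Hj.
    rewrite hON by lia. destruct Nat.eq_dec; [lia|auto].
  - apply IHk. lia.
Qed.

Lemma ONL_W m : ONL E (W m).
Proof. apply ONL_seq. lia. Qed.

Lemma length_W m : length (W m) = K.
Proof. unfold W. rewrite length_map, length_seq. auto. Qed.

Lemma weak_unif h d : d > 0 -> forall k, (k <= K)%nat -> exists N, forall m j, (m >= N)%nat -> (j < k)%nat ->
  Cmod << x m j, h >> < d.
Proof.
  intros Hd k. induction k; intros Hk.
  - exists 0%nat. intros; lia.
  - destruct IHk as [N1 H1]; [lia|]. destruct (hweak k Hk h d Hd) as [N2 H2].
    exists (N1 + N2)%nat. intros m j Hm Hj.
    destruct (Nat.eq_dec j k); [subst; apply H2; lia|]. apply H1; lia.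
Qed.

Lemma weak_seq (v : nat -> E) : (forall m, span E (W m) (v m) /\ Cre << v m, v m >> = 1) ->
  forall h, cz (fun m => << v m, h >>).
Proof.
  intros Hv h eps He.
  set (d := eps / (2 * INR K + 1)).
  assert (Hk : 0 <= INR K) by apply pos_INR.
  assert (Hd : d > 0) by (unfold d; apply Rdiv_lt_0_compat; lra).
  destruct (weak_unif h d Hd K (le_n K)) as [N HN]. exists N. intros m Hm.
  destruct (Hv m) as [[cs [Hl Hc]] Hn].
  assert (Hsq : sqsum cs = 1).
  { rewrite <- lincomb_norm with (E := E) (vs := W m); [rewrite <- Hc; auto|apply ONL_W|auto]. }
  assert (Hcb : forall c, In c cs -> -1 <= Cre c <= 1 /\ -1 <= Cim c <= 1).
  { intros c Hin. pose proof (sqsum_bound cs c Hin). split; nra. }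
  assert (Hvb : forall w, In w (W m) -> Rabs (Cre << w, h >>) <= d /\ Rabs (Cim << w, h >>) <= d).
  { intros w Hw. destruct (in_W m w Hw) as [j [Hj ->]]. specialize (HN m j Hm Hj).
    pose proof (Rabs_Cre_Cmod << x m j, h >>). pose proof (Rabs_Cim_Cmod << x m j, h >>). split; lra. }
  destruct (weak_bound E cs (W m) h d Hcb Hvb) as [B1 B2]. rewrite length_W in B1, B2.
  rewrite <- Hc in B1, B2.
  assert (Hlt : 2 * d * INR K < eps).
  { unfold d. assert (eps / (2 * INR K + 1) * (2 * INR K + 1) = eps) by (field; lra).
    assert (eps / (2 * INR K + 1) * (2 * INR K) < eps / (2 * INR K + 1) * (2 * INR K + 1)).
    { apply Rmult_lt_compat_l; [apply Rdiv_lt_0_compat|]; lra. } nra. }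
  split; lra.
Qed.

End W.

Section Core.
Variable E : HilbertSpace.
Notation "<< x , y >>" := (hinner E x y).
Notation "x +v y" := (hadd E x y) (at level 50, left associativity).
Notation "a *v x" := (hscal E a x) (at level 40).
Variable D : E -> Prop.
Variable A : E -> E.
Variable lam : R.
Hypothesis hA : is_self_adjoint E D A.
Variable B : E -> E.
Hypothesis HB1 : forall y, D (B y) /\ T E A lam (B y) = y.
Hypothesis HB2 : forall x, D x -> B (T E A lam x) = x.

Notation TT := (T E A lam).

Lemma inner_lsum_scal (k : E -> Cplx) (f : E -> E) (R : list E) h :
  << lsum E (map (fun s => k s *v f s) R), h >> = Csum (map (fun s => Cmul (k s) << f s, h >>) R).
Proof. induction R; simpl. apply inner_zero_l. rewrite hinner_add, hinner_scal, IHR. auto. Qed.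

Lemma core_id (v : E) (R : list E) : D v ->
  let q := proj E R (TT v) in
  let z := B (hsub E (TT v) q) in
  << TT z, z >> = Cadd (Cadd << A v, v >> (Copp (Cmul (RtoC lam) << v, v >>)))
                       (Cadd (Cadd (Copp << v, q >>) (Copp << q, v >>)) << q, B q >>) /\
  << z, z >> = Cadd << v, v >> (Cadd (Cadd (Copp << v, B q >>) (Copp << B q, v >>)) << B q, B q >>).
Proof.
  intros Hv q z.
  assert (Hz : z = hsub E v (B q)).
  { unfold z. rewrite (B_sub E D A lam hA B HB1 HB2), HB2; auto. }
  assert (HTz : TT z = hsub E (TT v) q) by (unfold z; apply (TB E D A lam B HB1)).
  assert (Hs : << TT v, B q >> = << v, q >>).
  { rewrite (T_sym E D A lam hA); auto. rewrite (TB E D A lam B HB1). auto. apply (DB E D A lam B HB1). }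
  split.
  - rewrite HTz. rewrite Hz. inner_simpl. rewrite Hs. unfold T. inner_simpl. cring.
  - rewrite Hz. inner_simpl. cring.
Qed.

Section Seq.
Variable R : list E.
Hypothesis HR : forall r, In r R -> D r.
Variable vs : nat -> E.
Hypothesis Hvs : forall m, D (vs m).
Hypothesis Hweak : forall h, cz (fun m => << vs m, h >>).

Definition cc m s := pc E (TT (vs m)) s.

Lemma cz_cc s : In s R -> cz (fun m => cc m s).
Proof.
  intros Hs. unfold cc, pc. apply cz_const_r.
  apply (cz_ext (fun m => << vs m, TT s >>)).
  - intros m. symmetry. apply (T_sym E D A lam hA); auto.
  - apply Hweak.
Qed.

Lemma cz_fixed (f : E -> E) h :
  cz (fun m => << lsum E (map (fun s => cc m s *v f s) R), h >>).
Proof.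
  apply (cz_ext (fun m => Csum (map (fun s => Cmul (cc m s) << f s, h >>) R))).
  - intros; symmetry; apply inner_lsum_scal.
  - apply cz_Csum. intros s Hs. apply cz_const_r. apply cz_cc; auto.
Qed.

Lemma cz_seq (f : E -> E) (hm : nat -> E) : (forall s, In s R -> cz (fun m => << f s, hm m >>)) ->
  cz (fun m => << lsum E (map (fun s => cc m s *v f s) R), hm m >>).
Proof.
  intros H.
  apply (cz_ext (fun m => Csum (map (fun s => Cmul (cc m s) << f s, hm m >>) R))).
  - intros; symmetry; apply inner_lsum_scal.
  - apply cz_Csum. intros s Hs. apply cz_mul. apply cz_cc; auto. apply H; auto.
Qed.

Lemma q_eq m : proj E R (TT (vs m)) = lsum E (map (fun s => cc m s *v s) R).
Proof. reflexivity. Qed.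
Lemma Bq_eq m : B (proj E R (TT (vs m))) = lsum E (map (fun s => cc m s *v B s) R).
Proof. unfold proj. rewrite (B_lsum E D A lam hA B HB1 HB2). reflexivity. Qed.

Lemma cz_conj_swap (a b : nat -> E) : cz (fun m => << b m, a m >>) -> cz (fun m => << a m, b m >>).
Proof. intros H. apply (cz_ext (fun m => Cconj << b m, a m >>)). intros; symmetry; apply hinner_conj. apply cz_conj; auto. Qed.

Definition err1 m := let q := proj E R (TT (vs m)) in
  Cadd (Cadd (Copp << vs m, q >>) (Copp << q, vs m >>)) << q, B q >>.
Definition err2 m := let q := proj E R (TT (vs m)) in
  Cadd (Cadd (Copp << vs m, B q >>) (Copp << B q, vs m >>)) << B q, B q >>.

Lemma cz_qv : cz (fun m => << proj E R (TT (vs m)), vs m >>).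
Proof.
  apply (cz_ext (fun m => << lsum E (map (fun s => cc m s *v s) R), vs m >>)); [reflexivity|].
  apply (cz_seq (fun s => s) vs). intros s _. apply cz_conj_swap. apply Hweak.
Qed.
Lemma cz_Bqv : cz (fun m => << B (proj E R (TT (vs m))), vs m >>).
Proof.
  apply (cz_ext (fun m => << lsum E (map (fun s => cc m s *v B s) R), vs m >>)); [intros; rewrite Bq_eq; auto|].
  apply (cz_seq B vs). intros s _. apply cz_conj_swap. apply Hweak.
Qed.
Lemma cz_Bq_fixed h : cz (fun m => << B (proj E R (TT (vs m))), h >>).
Proof.
  apply (cz_ext (fun m => << lsum E (map (fun s => cc m s *v B s) R), h >>)); [intros; rewrite Bq_eq; auto|].
  apply cz_fixed.
Qed.

Lemma cz_err1 : cz err1.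
Proof.
  unfold err1. apply cz_add; [apply cz_add|]; try apply cz_opp.
  - apply cz_conj_swap. apply cz_qv.
  - apply cz_qv.
  - apply (cz_ext (fun m => << lsum E (map (fun s => cc m s *v s) R), B (proj E R (TT (vs m))) >>)); [reflexivity|].
    apply (cz_seq (fun s => s)). intros s _. apply cz_conj_swap. apply cz_Bq_fixed.
Qed.

Lemma cz_err2 : cz err2.
Proof.
  unfold err2. apply cz_add; [apply cz_add|]; try apply cz_opp.
  - apply cz_conj_swap. apply cz_Bqv.
  - apply cz_Bqv.
  - apply (cz_ext (fun m => << lsum E (map (fun s => cc m s *v B s) R), B (proj E R (TT (vs m))) >>)); [intros; rewrite Bq_eq; auto|].
    apply (cz_seq B). intros s _. apply cz_conj_swap. apply cz_Bq_fixed.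
Qed.

End Seq.
End Core.

Section Step.
Variable E : HilbertSpace.
Notation "<< x , y >>" := (hinner E x y).
Notation "x +v y" := (hadd E x y) (at level 50, left associativity).
Notation "a *v x" := (hscal E a x) (at level 40).
Variable D : E -> Prop.
Variable A : E -> E.
Variable lam : R.
Hypothesis hA : is_self_adjoint E D A.
Variable B : E -> E.
Hypothesis HB1 : forall y, D (B y) /\ T E A lam (B y) = y.
Hypothesis HB2 : forall x, D x -> B (T E A lam x) = x.
Notation TT := (T E A lam).
Variable K : nat.
Hypothesis hK : (1 <= K)%nat.
Variable x : nat -> nat -> E.
Hypothesis hD : forall n j, (j < K)%nat -> D (x n j).
Hypothesis hON : forall n i j, (i < K)%nat -> (j < K)%nat ->
           hinner E (x n i) (x n j) = if Nat.eq_dec i j then Cone else Czero.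
Hypothesis hweak : forall j, (j < K)%nat -> weakly_to_zero E (fun n => x n j).
Hypothesis hlam : dist_tends_to_zero lam
            (fun n => in_spectrum_compression E A (map (x n) (seq 0 K))).

Lemma span_D vs v : (forall w, In w vs -> D w) -> span E vs v -> D v.
Proof.
  intros H [cs [_ ->]]. revert cs; induction vs; intros cs; destruct cs; simpl;
    try apply (D_zero E D A hA).
  apply (D_add E D A hA). apply (D_scal E D A hA). apply H; left; auto.
  apply IHvs. intros; apply H; right; auto.
Qed.

Lemma D_W m v : span E (W E K x m) v -> D v.
Proof. apply span_D. intros w Hw. destruct (in_W E K x m w Hw) as [j [Hj ->]]. auto. Qed.

Definition Good eps m v := span E (W E K x m) v /\ Cre << v, v >> = 1 /\
   Rabs (Cre << A v, v >> - lam) < eps.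

Lemma sel eps m : exists v, span E (W E K x m) v /\ Cre << v, v >> = 1 /\
  ((exists v', Good eps m v') -> Good eps m v).
Proof.
  destruct (classic (exists v', Good eps m v')) as [[v' Hv']|Hn].
  - exists v'. destruct Hv' as [H1 [H2 H3]]. split; auto. split; auto. intros; split; auto.
  - exists (x m 0%nat). split; [|split].
    + unfold W. destruct K as [|k]; [lia|]. simpl. apply span_head.
    + rewrite hON by lia. simpl. auto.
    + intros H; contradiction.
Qed.

Lemma good_eventually eps : eps > 0 -> exists N, forall m, (m >= N)%nat -> exists v, Good eps m v.
Proof.
  intros He. destruct (hlam eps He) as [N HN]. exists N. intros m Hm.
  destruct (HN m Hm) as [mu [[v0 [Hsp [Hnz Heig]]] Hmu]].
  assert (HD0 : D v0) by (eapply D_W; eauto).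
  set (n0 := Cre << v0, v0 >>).
  assert (Hn0 : n0 > 0).
  { pose proof (hinner_pos E v0). destruct (Rle_lt_or_eq_dec _ _ H); auto.
    exfalso. apply Hnz. apply hinner_def. auto. }
  set (s := sqrt n0).
  assert (Hs : s > 0) by (apply sqrt_lt_R0; auto).
  assert (Hss : s * s = n0) by (apply sqrt_sqrt; lra).
  assert (He0 : << A v0, v0 >> = Cmul (RtoC mu) << v0, v0 >>).
  { specialize (Heig v0 Hsp). rewrite inner_sub_l, hinner_scal in Heig.
    pose proof (f_equal Cre Heig) as Hre. pose proof (f_equal Cim Heig) as Him.
    simpl in Hre, Him. apply Ceq; simpl; lra. }
  assert (Hi0 : Cim << v0, v0 >> = 0) by apply inner_im_self.
  exists (RtoC (/ s) *v v0). split; [|split].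
  - apply span_scal; auto.
  - inner_simpl. simpl. rewrite Hi0. fold n0. rewrite <- Hss. field. lra.
  - rewrite (A_scal E D A hA) by auto. inner_simpl. rewrite He0. simpl. rewrite Hi0. fold n0.
    rewrite Rabs_minus_sym.
    match goal with |- Rabs (lam - ?e) < _ => replace e with mu end. auto.
    rewrite <- Hss. field. lra.
Qed.

Lemma step (L : list E) (eps : R) : (forall l, In l L -> D l) -> eps > 0 ->
  exists z mu, D z /\ z <> hzero E /\
    (forall l, In l L -> << z, l >> = Czero /\ << A z, l >> = Czero) /\
    << A z, z >> = Cmul (RtoC mu) << z, z >> /\ Rabs (lam - mu) < eps.
Proof.
  intros HL He.
  set (G := L ++ map B L).
  assert (HG : forall g, In g G -> D g).
  { intros g Hg. unfold G in Hg. apply in_app_or in Hg. destruct Hg as [Hg|Hg]; auto.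
    apply in_map_iff in Hg. destruct Hg as [l [<- _]]. apply (DB E D A lam B HB1). }
  destruct (GS E D A hA G HG) as [R [HRD [HRo HRsp]]].
  set (vs := fun m => proj1_sig (constructive_indefinite_description _ (sel (eps/4) m))).
  assert (Hvs : forall m, span E (W E K x m) (vs m) /\ Cre << vs m, vs m >> = 1 /\
                  ((exists v', Good (eps/4) m v') -> Good (eps/4) m (vs m))).
  { intros m. unfold vs. destruct (constructive_indefinite_description _ _) as [v Hv]. simpl. auto. }
  assert (HvD : forall m, D (vs m)) by (intros m; eapply D_W; destruct (Hvs m) as [Hh _]; exact Hh).
  assert (Hwk : forall h, cz (fun m => << vs m, h >>)).
  { apply (weak_seq E K x hON hweak). intros m. destruct (Hvs m) as [H1 [H2 _]]. auto. }
  assert (HRD' : forall r, In r R -> D r) by (intros; apply HRD; auto).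
  destruct (good_eventually (eps/4)) as [N1 HN1]; [lra|].
  destruct (cz_err1 E D A lam hA B HB1 HB2 R HRD' vs HvD Hwk (eps/8)) as [N2 HN2]; [lra|].
  destruct (cz_err2 E D A lam hA B HB1 HB2 R HRD' vs HvD Hwk (1/2)) as [N3 HN3]; [lra|].
  set (m := (N1 + N2 + N3)%nat).
  set (v := vs m).
  assert (Hgood : Good (eps/4) m v) by (apply Hvs; apply HN1; unfold m; lia).
  destruct Hgood as [_ [Hvn Hva]].
  set (q := proj E R (TT v)).
  set (y := hsub E (TT v) q).
  set (z := B y).
  destruct (core_id E D A lam hA B HB1 HB2 v R (HvD m)) as [C1 C2].
  fold q y z in C1, C2.
  destruct (HN2 m) as [E1 _]; [unfold m; lia|].
  destruct (HN3 m) as [E2 _]; [unfold m; lia|].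
  unfold err1, err2 in E1, E2. cbv zeta in E1, E2. fold v q in E1, E2.
  set (e1 := Cadd (Cadd (Copp << v, q >>) (Copp << q, v >>)) << q, B q >>) in *.
  set (e2 := Cadd (Cadd (Copp << v, B q >>) (Copp << B q, v >>)) << B q, B q >>) in *.
  assert (Hy : forall g, In g G -> << y, g >> = Czero).
  { apply HRsp. intros r Hr. unfold y, q. apply (proj_orth E); auto. apply HRD; auto. }
  assert (HTz : TT z = y) by apply (TB E D A lam B HB1).
  assert (Hzl : forall l, In l L -> << z, l >> = Czero).
  { intros l Hl. unfold z. rewrite (B_sym E D A lam hA B HB1). apply Hy.
    unfold G. apply in_or_app. right. apply in_map. auto. }
  assert (HAz : A z = y +v (RtoC lam *v z)) by (rewrite (A_T E A lam), HTz; auto).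
  assert (Hiv : Cim << v, v >> = 0) by apply inner_im_self.
  assert (Hiz : Cim << z, z >> = 0) by apply inner_im_self.
  assert (HAzim : Cim << A z, z >> = 0).
  { pose proof (f_equal Cim (A_sym E D A hA z z (DB E D A lam B HB1 y) (DB E D A lam B HB1 y))) as H.
    rewrite (hinner_conj E (A z) z) in H. simpl in H. lra. }
  set (Zr := Cre << z, z >>).
  assert (HZr : Zr = 1 + Cre e2) by (unfold Zr; rewrite C2; simpl; lra).
  assert (HAr : Cre << A z, z >> = Cre << A v, v >> - lam + Cre e1 + lam * Zr).
  { rewrite HAz. inner_simpl. rewrite <- HTz, C1. simpl. rewrite Hiv, Hiz. unfold Zr. rewrite Hvn. unfold e1; simpl. ring. }
  assert (HZp : Zr > 1/2).
  { rewrite HZr. revert E2. unfold Rabs; destruct Rcase_abs; lra. }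
  exists z, (Cre << A z, z >> / Zr). split; [|split; [|split; [|split]]].
  - apply (DB E D A lam B HB1).
  - intros Hz0. assert (Zr = 0) by (unfold Zr; rewrite Hz0, inner_zero_l; reflexivity). lra.
  - intros l Hl. split; [auto|]. rewrite HAz. inner_simpl. rewrite Hzl by auto.
    rewrite Hy by (unfold G; apply in_or_app; left; auto). cring.
  - apply Ceq; simpl; rewrite ?Hiz, ?HAzim; fold Zr; [field|]; lra.
  - assert (Hd : Cre << A z, z >> / Zr - lam = (Cre << A v, v >> - lam + Cre e1) / Zr)
      by (rewrite HAr; field; lra).
    rewrite Rabs_minus_sym. revert Hd Hva E1 HZp.
    generalize (Cre << A z, z >> / Zr) (Cre << A v, v >>) (Cre e1). intros mu a e Hd Ha Hb HZ.
    assert (Hq : -(3 * eps / 8) < a - lam + e < 3 * eps / 8).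
    { revert Ha Hb. unfold Rabs; repeat destruct Rcase_abs; intros; lra. }
    assert (Hm1 : (a - lam + e) / Zr < eps).
    { apply (Rmult_lt_reg_r Zr); [lra|]. unfold Rdiv. rewrite Rmult_assoc, Rinv_l, Rmult_1_r by lra. nra. }
    assert (Hm2 : -eps < (a - lam + e) / Zr).
    { apply (Rmult_lt_reg_r Zr); [lra|]. unfold Rdiv. rewrite Rmult_assoc, Rinv_l, Rmult_1_r by lra. nra. }
    rewrite Hd. unfold Rabs; destruct Rcase_abs; lra.
Qed.

End Step.

Lemma nat_unbounded (r : R) : exists N : nat, r < INR N.
Proof.
  destruct (archimed r) as [H1 _].
  destruct (Z_lt_le_dec 0 (up r)) as [Hp|Hn].
  - exists (Z.to_nat (up r)). rewrite INR_IZR_INZ, Z2Nat.id by lia. auto.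
  - exists 0%nat. simpl. apply IZR_le in Hn. lra.
Qed.

Section Final.
Variable E : HilbertSpace.
Notation "<< x , y >>" := (hinner E x y).
Notation "x +v y" := (hadd E x y) (at level 50, left associativity).
Notation "a *v x" := (hscal E a x) (at level 40).
Variable D : E -> Prop.
Variable A : E -> E.
Variable lam : R.
Hypothesis hA : is_self_adjoint E D A.
Variable B : E -> E.
Hypothesis HB1 : forall y, D (B y) /\ T E A lam (B y) = y.
Hypothesis HB2 : forall x, D x -> B (T E A lam x) = x.
Variable c : R.
Hypothesis HB3 : forall y, hnorm E (B y) <= c * hnorm E y.
Notation TT := (T E A lam).
Variable K : nat.
Hypothesis hK : (1 <= K)%nat.
Variable x : nat -> nat -> E.
Hypothesis hD : forall n j, (j < K)%nat -> D (x n j).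
Hypothesis hON : forall n i j, (i < K)%nat -> (j < K)%nat ->
           hinner E (x n i) (x n j) = if Nat.eq_dec i j then Cone else Czero.
Hypothesis hweak : forall j, (j < K)%nat -> weakly_to_zero E (fun n => x n j).
Hypothesis hlam : dist_tends_to_zero lam
            (fun n => in_spectrum_compression E A (map (x n) (seq 0 K))).
Variable e : nat -> E.
Hypothesis He : forall x eps, eps > 0 -> exists k,
        sqrt (Cre (hinner E (hadd E x (hopp E (e k))) (hadd E x (hopp E (e k))))) < eps.

Definition zspec L n z := (forall l, In l L -> D l) -> D z /\ z <> hzero E /\
  (forall l, In l L -> << z, l >> = Czero /\ << A z, l >> = Czero) /\
  exists mu, << A z, z >> = Cmul (RtoC mu) << z, z >> /\ Rabs (lam - mu) < / (INR n + 1).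

Lemma zex L n : exists z, zspec L n z.
Proof.
  destruct (classic (forall l, In l L -> D l)) as [HL|HL].
  - destruct (step E D A lam hA B HB1 HB2 K hK x hD hON hweak hlam L (/ (INR n + 1)) HL) as [z [mu H]].
    { apply Rinv_0_lt_compat. pose proof (pos_INR n). lra. }
    exists z. intros _. destruct H as [H1 [H2 [H3 [H4 H5]]]]. repeat split; auto.
    apply H3; auto. apply H3; auto. exists mu; auto.
  - exists (hzero E). intros H; contradiction.
Qed.

Definition zf L n := proj1_sig (constructive_indefinite_description _ (zex L n)).
Lemma zf_spec L n : zspec L n (zf L n).
Proof. unfold zf. destruct (constructive_indefinite_description _ _). auto. Qed.

Fixpoint V (n : nat) : list E :=
  match n with
  | O => nil
  | S n => (V n ++ B (e n) :: nil) ++ zf (V n ++ B (e n) :: nil) n :: nil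
  end.

Lemma VD n : forall v, In v (V n) -> D v.
Proof.
  induction n; simpl; intros v Hv; [contradiction|].
  assert (HL : forall l, In l (V n ++ B (e n) :: nil) -> D l).
  { intros l Hl. apply in_app_or in Hl. destruct Hl as [Hl|[<-|[]]]; auto. apply (DB E D A lam B HB1). }
  apply in_app_or in Hv. destruct Hv as [Hv|[<-|[]]]; auto.
  apply (zf_spec _ n HL).
Qed.

Lemma hnorm_sq u : hnorm E u ^ 2 = Cre << u, u >>.
Proof. unfold hnorm. simpl. rewrite Rmult_1_r. apply sqrt_sqrt. apply hinner_pos. Qed.

Lemma par_bound a b (l : R) : Cre << a +v (RtoC l *v b), a +v (RtoC l *v b) >> <=
   2 * Cre << a, a >> + 2 * (l * l) * Cre << b, b >>.
Proof.
  pose proof (hinner_pos E (hsub E a (RtoC l *v b))) as H.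
  unfold hsub in H. inner_simpl. revert H. inner_simpl. simpl. intros. nra.
Qed.

Lemma density x0 eps : D x0 -> eps > 0 -> exists n y, span E (V n) y /\
        hnorm E (hsub E x0 y) ^ 2 + hnorm E (hsub E (A x0) (A y)) ^ 2 < eps ^ 2.
Proof.
  intros Hx Heps.
  set (M := c * c + 2 + 2 * (lam * lam) * (c * c)).
  assert (HM : 2 <= M) by (unfold M; nra).
  set (d0 := eps / (M + 1)).
  assert (Hd0 : d0 > 0) by (unfold d0; apply Rdiv_lt_0_compat; lra).
  destruct (He (TT x0) d0 Hd0) as [k Hk].
  set (d := hsub E (TT x0) (e k)).
  assert (Hdn : Cre << d, d >> < d0 * d0).
  { change (hnorm E d < d0) in Hk. rewrite <- hnorm_sq.
    assert (0 <= hnorm E d) by apply sqrt_pos. simpl. nra. }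
  assert (HBd : Cre << B d, B d >> <= c * c * Cre << d, d >>).
  { rewrite <- !hnorm_sq. pose proof (HB3 d). pose proof (sqrt_pos (Cre << B d, B d >>)).
    pose proof (sqrt_pos (Cre << d, d >>)). unfold hnorm in *. simpl. nra. }
  assert (Hx1 : hsub E x0 (B (e k)) = B d).
  { unfold d. rewrite (B_sub E D A lam hA B HB1 HB2), HB2; auto. }
  assert (Hx2 : hsub E (A x0) (A (B (e k))) = d +v (RtoC lam *v B d)).
  { rewrite <- (A_sub E D A hA) by (auto; apply (DB E D A lam B HB1)). rewrite Hx1.
    rewrite (A_T E A lam), (TB E D A lam B HB1). auto. }
  exists (S k), (B (e k)). split.
  - simpl. apply span_app_l. apply span_app_r. apply span_single.
  - rewrite Hx1, Hx2, !hnorm_sq. pose proof (par_bound d (B d) lam).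
    pose proof (hinner_pos E d).
    assert (Hlt : M * (d0 * d0) < eps ^ 2).
    { unfold d0. simpl. rewrite Rmult_1_r.
      replace (M * (eps / (M + 1) * (eps / (M + 1)))) with (eps * eps * (M / ((M + 1) * (M + 1)))) by (field; lra).
      assert (M / ((M + 1) * (M + 1)) < 1).
      { apply (Rmult_lt_reg_r ((M + 1) * (M + 1))); [nra|]. unfold Rdiv. rewrite Rmult_assoc, Rinv_l by nra. nra. }
      assert (0 < eps * eps) by nra. nra. }
    assert (Cre << B d, B d >> + (2 * Cre << d, d >> + 2 * (lam * lam) * Cre << B d, B d >>) <= M * Cre << d, d >>).
    { unfold M. pose proof (hinner_pos E (B d)). nra. }
    assert (M * Cre << d, d >> <= M * (d0 * d0)) by (apply Rmult_le_compat_l; lra).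
    lra.
Qed.

Lemma V_spurious : ~ in_spectrum E D A lam -> spurious E D A lam.
Proof.
  intros Hns. exists V. split; [|split; [|split; [|split]]].
  - intros n v Hv. eapply VD; eauto.
  - intros n x0 Hx. simpl. apply span_app_l, span_app_l. auto.
  - intros x0 eps Hx Heps. apply density; auto.
  - intros eps Heps. destruct (nat_unbounded (/ eps)) as [N HN]. exists (S N). intros n Hn.
    destruct n as [|n]; [lia|]. simpl V.
    set (L := V n ++ B (e n) :: nil).
    assert (HL : forall l, In l L -> D l).
    { intros l Hl. apply in_app_or in Hl. destruct Hl as [Hl|[<-|[]]]; [eapply VD; eauto|].
      apply (DB E D A lam B HB1). }
    destruct (zf_spec L n HL) as [HzD [Hz0 [Hzl [mu [Hmu1 Hmu2]]]]].
    exists mu. split.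
    + exists (zf L n). split; [apply span_app_r, span_single|]. split; auto.
      intros w [cs [_ ->]]. apply inner_lincomb_orth. intros v Hv.
      apply in_app_or in Hv. destruct Hv as [Hv|[<-|[]]].
      * rewrite inner_sub_l, hinner_scal. destruct (Hzl v Hv) as [H1 H2]. rewrite H1, H2. cring.
      * rewrite inner_sub_l, hinner_scal, Hmu1. cring.
    + assert (HnN : INR N <= INR n) by (apply le_INR; lia).
      assert (Hi : / (INR n + 1) < eps).
      { assert (Hpos : 0 < INR n + 1) by (pose proof (pos_INR n); lra).
        apply (Rmult_lt_reg_r (INR n + 1)); auto. rewrite Rinv_l by lra.
        assert (eps * / eps = 1) by (field; lra).
        assert (eps * / eps < eps * (INR n + 1)) by (apply Rmult_lt_compat_l; lra). lra. }
      lra.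
  - auto.
Qed.

End Final.

Theorem mainTheorem2 (E : HilbertSpace) (D : E -> Prop) (A : E -> E)
  (hA : is_self_adjoint E D A)
  (K : nat) (hK : (1 <= K)%nat)
  (x : nat -> nat -> E)
  (hD : forall n j, (j < K)%nat -> D (x n j))
  (hON : forall n i j, (i < K)%nat -> (j < K)%nat ->
           hinner E (x n i) (x n j) = if Nat.eq_dec i j then Cone else Czero)
  (hweak : forall j, (j < K)%nat -> weakly_to_zero E (fun n => x n j))
  (lam : R)
  (hlam : dist_tends_to_zero lam
            (fun n => in_spectrum_compression E A (map (x n) (seq 0 K)))) :
  spurious E D A lam \/ in_spectrum E D A lam.
Proof.
  destruct (classic (in_spectrum E D A lam)) as [Hs|Hs]; [right; auto|left].
  assert (Hr : in_resolvent E D A lam) by (apply NNPP; exact Hs).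
  destruct Hr as [B [H1 [H2 [c Hc]]]].
  destruct (hseparable E) as [e He].
  exact (V_spurious E D A lam hA B H1 H2 c Hc K hK x hD hON hweak hlam e He Hs).
Qed.
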